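(* Let $q$ be a prime power with $q\equiv2\pmod 3$, let $m,n$ be positive integers, let $\omega\in\mathbb{F}_{q^2}$ be an element of multiplicative order $3$, and let $\varepsilon\in\mathbb{F}_q^*\cup\{\pm\omega,\pm\omega^2\}$. Put $f(x)=(x+x^q)^m+\varepsilon(x+\omega x^q)^n$. Then: (i) if $\varepsilon\in\mathbb{F}_q^*$, $f$ permutes $\mathbb{F}_{q^2}$ if and only if $\gcd(mn,q-1)=1$ and $3\nmid n$; (ii) if $\varepsilon=\pm\omega$, $f$ permutes $\mathbb{F}_{q^2}$ if and only if $\gcd(mn,q-1)=1$ and $n\not\equiv1\pmod3$; (iii) if $\varepsilon=\pm\omega^2$, $f$ permutes $\mathbb{F}_{q^2}$ if and only if $\gcd(mn,q-1)=1$ and $n\not\equiv2\pmod3$.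
   Context: $f$ permutes $\mathbb{F}_{q^2}$ means the map $x\mapsto f(x)$ on $\mathbb{F}_{q^2}$ is bijective. *)

(* Defs.v *)
From mathcomp Require Import all_boot all_algebra all_field.
Set Implicit Arguments. Unset Strict Implicit. Unset Printing Implicit Defensive.
Import GRing.Theory.
Local Open Scope ring_scope.

Definition permutes (F : finFieldType) (f : F -> F) : Prop := bijective f.

Definition in_Fq (F : finFieldType) (q : nat) (x : F) : bool := x ^+ q == x.

Definition fpoly (F : finFieldType) (q m n : nat) (w eps : F) (x : F) : F :=
  (x + x ^+ q) ^+ m + eps * (x + w * x ^+ q) ^+ n.

(* Main.v *)
Require Import Defs.
From mathcomp Require Import all_boot all_algebra all_field all_solvable.
From mathcomp Require Import zify ring.
Import GRing.Theory.
Local Open Scope ring_scope.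

Lemma frob_add (F : finFieldType) (q : nat)
  (hq : exists p k : nat, [/\ prime p, (0 < k)%N & q = (p ^ k)%N])
  (hF : #|F| = (q ^ 2)%N) (x y : F) : (x + y) ^+ q = x ^+ q + y ^+ q.
Proof.
case: hq => p [k [pp k0 E]]; subst q.
have pc : p \in [pchar F].
  have e : #|F| = (p ^ (k * 2))%N by rewrite hF expnM.
  exact: card_finPcharP e pp.
apply: exprDn_pchar.
by rewrite pnatX (pnatE _ pp) pc.
Qed.

Lemma frob_inv (F : finFieldType) (q : nat)
  (hF : #|F| = (q ^ 2)%N) (x : F) : (x ^+ q) ^+ q = x.
Proof. have e : (q * q = #|F|)%N by rewrite hF.
by rewrite -exprM e expf_card. Qed.

Lemma pow_inj_K (F : finFieldType) (q j : nat) (q1 : (1 < q)%N) (j0 : (0 < j)%N)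
  (cj : coprime j q.-1) (a b : F) :
  a ^+ j = b ^+ j -> (b != 0 -> (a / b) ^+ q = a / b) -> a = b.
Proof.
have [->|b0] := eqVneq b 0.
  by move=> hab _; move: hab; rewrite expr0n gtn_eqF // => /eqP; rewrite expf_eq0 j0 /= => /eqP ->.
move=> hab hK.
set r := a / b.
have rj : r ^+ j = 1 by rewrite /r exprMn hab exprVn divff // expf_neq0.
have r0 : r != 0.
  by apply/eqP=> r0; move: rj; rewrite r0 expr0n gtn_eqF //; move/eqP; rewrite eq_sym oner_eq0.
have rq1 : r ^+ q.-1 = 1.
  apply: (mulIf r0); rewrite mul1r -exprSr prednK ?hK //; lia.
case: (egcdnP q.-1 j0) => km kn e _.
have g1 : gcdn j q.-1 = 1%N by apply/eqP.
rewrite g1 in e.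
have r1 : r = 1.
  have : r ^+ (km * j) = r ^+ (kn * q.-1 + 1) by rewrite e.
  by rewrite mulnC exprM rj expr1n exprD mulnC exprM rq1 expr1n mul1r expr1 => <-.
have ar : a = r * b by rewrite /r divfK.
by rewrite ar r1 mul1r.
Qed.

Lemma exists_root (F : finFieldType) (q j : nat) (hF : #|F| = (q ^ 2)%N)
  (q1 : (1 < q)%N) (nc : ~~ coprime j q.-1) :
  exists r : F, [/\ r ^+ q = r, r ^+ j = 1 & r != 1].
Proof.
pose N := #|F|.-1.
have eN : N = (q.+1 * q.-1)%N by rewrite /N hF; nia.
have N0 : (0 < N)%N by rewrite eN; nia.
have : has N.-primitive_root (enum (predC1 (0 : F))).
  apply: has_prim_root => //.
  - apply/allP => x; rewrite mem_enum /= => x0; rewrite unity_rootE; apply/eqP.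
    apply: (mulIf x0); rewrite mul1r -exprSr /N prednK ?expf_card //.
    by rewrite hF; nia.
  - exact: enum_uniq.
  - by rewrite -cardE cardC1.
case/hasP => g _ pg.
pose d := gcdn j q.-1.
have d1 : d != 1%N by [].
have d0 : (0 < d)%N by rewrite gcdn_gt0; apply/orP; right; lia.
have /dvdnP [s es] : (d %| q.-1)%N by exact: dvdn_gcdr.
have /dvdnP [t et] : (d %| j)%N by exact: dvdn_gcdl.
have gN : g ^+ N = 1 := prim_expr_order pg.
exists (g ^+ (q.+1 * s)); split.
- rewrite -exprM.
  have -> : (q.+1 * s * q = q.+1 * s + N * s)%N by rewrite eN es; nia.
  by rewrite exprD [g ^+ (N * s)]exprM gN expr1n mulr1.
- rewrite -exprM.
  have -> : (q.+1 * s * j = N * t)%N by rewrite eN es et; nia.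
  by rewrite exprM gN expr1n.
- rewrite -[1](expr0 g) (eq_prim_root_expr pg) mod0n modn_small.
    have : (0 < s)%N by move: es; clear -q1; nia.
    nia.
  have s0 : (0 < s)%N by move: es; clear -q1; nia.
  rewrite eN es; move: d0 d1 s0; clearbody d; clear; nia.
Qed.
Lemma core (F : finFieldType) (q m n e : nat) (w eps : F)
 (hadd : forall x y : F, (x + y) ^+ q = x ^+ q + y ^+ q)
 (hinv : forall x : F, (x ^+ q) ^+ q = x)
 (hroot : forall j, ~~ coprime j q.-1 ->
     exists r : F, [/\ r ^+ q = r, r ^+ j = 1 & r != 1])
 (q1 : (1 < q)%N) (hq3 : (q %% 3 = 2)%N) (hm : (0 < m)%N) (hn : (0 < n)%N)
 (hw : 3.-primitive_root w)
 (eps0 : eps != 0) (epsq : eps ^+ q = w ^+ e * eps) :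
 permutes (fpoly q m n w eps) <-> coprime (m * n) q.-1 /\ ~~ (3 %| 2 * n + e)%N.
Proof.
have w3 : w ^+ 3 = 1 := prim_expr_order hw.
have wq : w ^+ q = w ^+ 2.
  by rewrite {1}(divn_eq q 3) hq3 exprD mulnC exprM w3 expr1n mul1r.
have wne k : (w ^+ k == 1) = (3 %| k)%N.
  by rewrite -(expr0 w) (eq_prim_root_expr hw) mod0n.
have w0 : w != 0.
  by apply/eqP => w0; move: w3; rewrite w0 expr0n /= => /eqP; rewrite eq_sym oner_eq0.
have w1 : w - 1 != 0 by rewrite subr_eq0 -[w]expr1 wne.
have hN (x : F) : (- x) ^+ q = - (x ^+ q).
  have := hadd (- x) x; rewrite addNr expr0n gtn_eqF; last by lia.
  by move/eqP; rewrite eq_sym addr_eq0 => /eqP.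
have hB (x y : F) : (x - y) ^+ q = x ^+ q - y ^+ q by rewrite hadd hN.
pose u (x : F) := x + x ^+ q.
pose y (x : F) := x + w * x ^+ q.
have uq (x : F) : (u x) ^+ q = u x by rewrite /u hadd hinv addrC.
have yq (x : F) : (y x) ^+ q = w ^+ 2 * y x.
  by rewrite /y hadd exprMn wq hinv mulrDr mulrA -exprSr w3 mul1r addrC.
pose c := w ^+ (2 * n + e).
have zq (x : F) : (eps * (y x) ^+ n) ^+ q = c * (eps * (y x) ^+ n).
  rewrite exprMn epsq exprAC yq exprMn /c exprD -exprM.
  ring.
have fE (x : F) : fpoly q m n w eps x = (u x) ^+ m + eps * (y x) ^+ n by [].
have fr (r x : F) : r ^+ q = r -> fpoly q m n w eps (r * x) = (r * u x) ^+ m + eps * (r * y x) ^+ n.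
  by move=> rq; rewrite /fpoly /u /y exprMn rq; congr (_ ^+ _ + _ * _ ^+ _); ring.
split.
- move=> bij; have inj := bij_inj bij; split.
  + rewrite coprimeMl; apply/andP; split; apply/negPn/negP => nc;
      have [r [rq rj r1]] := hroot _ nc.
    * pose x0 := w - 1.
      have y0 : y x0 = 0.
        rewrite /y /x0 hB expr1n wq; ring: w3.
      have := fr r x0 rq; rewrite y0 mulr0 exprMn rj mul1r -y0 -fE.
      move/inj => /eqP; rewrite -subr_eq0 -{2}[x0]mul1r -mulrBl mulf_eq0 subr_eq0.
      by rewrite (negPf r1) /x0 (negPf w1).
    * pose x0 := w - w ^+ 2.
      have u0 : u x0 = 0.
        rewrite /u /x0 hB wq exprAC wq -exprM; ring: w3.
      have := fr r x0 rq; rewrite u0 mulr0 [(r * y x0) ^+ n]exprMn rj mul1r -u0 -fE.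
      move/inj => /eqP; rewrite -subr_eq0 -{2}[x0]mul1r -mulrBl mulf_eq0 subr_eq0.
      rewrite (negPf r1) /x0 subr_eq0 /= eq_sym -[w in _ == w]expr1.
      by rewrite (eq_prim_root_expr hw).
  + apply/negP => d3.
    have c1 : c = 1 by apply/eqP; rewrite /c wne.
    case: bij => g _ gf.
    have : (fpoly q m n w eps (g w)) ^+ q = fpoly q m n w eps (g w).
      by rewrite fE hadd exprAC uq zq c1 mul1r.
    rewrite gf wq -{2}[w]expr1 => /eqP.
    by rewrite (eq_prim_root_expr hw).
- case=> cop nd; rewrite coprimeMl in cop; case/andP: cop => cm cn.
  have c1 : c != 1 by rewrite /c wne.
  apply: injF_bij => x1 x2 H.
  have [a ea] : {a | a = u x1 ^+ m - u x2 ^+ m} by eexists.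
  have [b eb] : {b | b = eps * y x2 ^+ n - eps * y x1 ^+ n} by eexists.
  have ab : a = b.
    apply/eqP; rewrite -subr_eq0; apply/eqP.
    have -> : a - b = fpoly q m n w eps x1 - fpoly q m n w eps x2 by rewrite !fE ea eb; ring.
    by rewrite H subrr.
  have aq : a ^+ q = a by rewrite ea hB [(u x1 ^+ m) ^+ q]exprAC [(u x2 ^+ m) ^+ q]exprAC !uq.
  have bq : b ^+ q = c * b by rewrite eb hB !zq mulrBr.
  have a0 : a = 0.
    have : (c - 1) * a = 0.
      rewrite mulrBl mul1r.
      have -> : c * a = a by rewrite {1}ab -bq -ab aq.
      by rewrite subrr.
    by move/eqP; rewrite mulf_eq0 subr_eq0 (negPf c1) => /eqP.
  have um : u x1 ^+ m = u x2 ^+ m by apply/eqP; rewrite -subr_eq0 -ea a0.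
  have yn : y x1 ^+ n = y x2 ^+ n.
    by apply: (mulfI eps0); apply/eqP; rewrite eq_sym -subr_eq0 -eb -ab a0.
  have q1' : (1 < q)%N := q1.
  have ue : u x1 = u x2.
    apply: (@pow_inj_K F q m q1 hm cm _ _ um) => _.
    by rewrite exprMn exprVn !uq.
  have ye : y x1 = y x2.
    apply: (@pow_inj_K F q n q1 hn cn _ _ yn) => y20.
    rewrite exprMn exprVn !yq invfM mulrACA divff ?mul1r //.
    by rewrite expf_neq0.
  have : (w - 1) * x1 ^+ q = (w - 1) * x2 ^+ q.
    have E x : (w - 1) * x ^+ q = y x - u x by rewrite /y /u; ring.
    by rewrite !E ue ye.
  by move/(mulfI w1) => /(congr1 (fun t => t ^+ q)); rewrite !hinv.
Qed.

Theorem proposition3p4 (F : finFieldType) (q : nat)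
  (hq : exists p k : nat, [/\ prime p, (0 < k)%N & q = (p ^ k)%N])
  (hF : #|F| = (q ^ 2)%N) (hq3 : (q %% 3 = 2)%N)
  (m n : nat) (hm : (0 < m)%N) (hn : (0 < n)%N)
  (w : F) (hw : 3.-primitive_root w) (eps : F) :
  ((eps != 0) && in_Fq q eps ->
     (permutes (fpoly q m n w eps) <->
        coprime (m * n) q.-1 /\ ~~ (3 %| n)%N)) /\
  ((eps = w \/ eps = - w) ->
     (permutes (fpoly q m n w eps) <->
        coprime (m * n) q.-1 /\ (n %% 3 != 1)%N)) /\
  ((eps = w ^+ 2 \/ eps = - w ^+ 2) ->
     (permutes (fpoly q m n w eps) <->
        coprime (m * n) q.-1 /\ (n %% 3 != 2)%N)).
Proof.
have q1 : (1 < q)%N by lia.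
have hadd := @frob_add F q hq hF.
have hinv := @frob_inv F q hF.
have hroot j := @exists_root F q j hF q1.
have w3 : w ^+ 3 = 1 := prim_expr_order hw.
have wq : w ^+ q = w ^+ 2.
  by rewrite {1}(divn_eq q 3) hq3 exprD mulnC exprM w3 expr1n mul1r.
have w0 : w != 0.
  by apply/eqP => w0; move: w3; rewrite w0 expr0n /= => /eqP; rewrite eq_sym oner_eq0.
have hN (x : F) : (- x) ^+ q = - (x ^+ q).
  have := hadd (- x) x; rewrite addNr expr0n gtn_eqF; last by lia.
  by move/eqP; rewrite eq_sym addr_eq0 => /eqP.
have C e : eps != 0 -> eps ^+ q = w ^+ e * eps ->
    permutes (fpoly q m n w eps) <-> coprime (m * n) q.-1 /\ ~~ (3 %| 2 * n + e)%N.
  by move=> e0 eq; apply: core.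
split; last split.
- case/andP => e0 /eqP eq.
  rewrite (C 0%N e0); last by rewrite expr0 mul1r.
  have -> : (3 %| 2 * n + 0)%N = (3 %| n)%N by apply/idP/idP => ?; lia.
  by [].
- move=> he.
  have e0 : eps != 0 by case: he => ->; rewrite ?oppr_eq0.
  rewrite (C 1%N e0); last first.
    by case: he => ->; rewrite ?hN wq expr1 ?mulrN -expr2.
  have -> : (3 %| 2 * n + 1)%N = (n %% 3 == 1)%N by apply/idP/idP => ?; lia.
  by [].
- move=> he.
  have e0 : eps != 0 by case: he => ->; rewrite ?oppr_eq0 expf_neq0.
  have w2q : (w ^+ 2) ^+ q = w ^+ 2 * w ^+ 2.
    by rewrite exprAC wq -exprM -exprD.
  rewrite (C 2%N e0); last first.
    by case: he => ->; rewrite ?hN w2q ?mulrN.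
  have -> : (3 %| 2 * n + 2)%N = (n %% 3 == 2)%N by apply/idP/idP => ?; lia.
  by [].
Qed.
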